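(* Let $L''$ be the Latin square of order $6$ $$L''=\begin{pmatrix} a&b&c&d&e&f\\ b&c&a&e&f&d\\ c&a&b&f&d&e\\ d&e&f&a&c&b\\ e&f&d&c&b&a\\ f&d&e&b&a&c \end{pmatrix}.$$ Let $L$ be any array obtained from $L''$ by replacing an arbitrary subset (possibly empty) of the occurrences of the symbol $d$ by a new symbol $g$. Then $L$ has no transversal.
   Context: An entry of an $n\times n$ array $A$ is a triple $(i,j,A_{ij})$. A transversal of an $n\times n$ array is a set of $n$ entries, no two agreeing in row, column, or symbol. Here $a,b,c,d,e,f,g$ are seven distinct symbols. *)

(* Defs.v *)
From HB Require Import structures.
From mathcomp Require Import all_boot.
Set Implicit Arguments. Unset Strict Implicit. Unset Printing Implicit Defensive.

Inductive sym := sa | sb | sc | sd | se | sf | sg.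

Definition sym_to_nat (s : sym) : nat :=
  match s with sa => 0 | sb => 1 | sc => 2 | sd => 3 | se => 4 | sf => 5 | sg => 6 end.
Definition nat_to_sym (n : nat) : sym :=
  match n with 0 => sa | 1 => sb | 2 => sc | 3 => sd | 4 => se | 5 => sf | _ => sg end.
Lemma sym_to_natK : cancel sym_to_nat nat_to_sym. Proof. by case. Qed.
HB.instance Definition _ := Equality.copy sym (can_type sym_to_natK).
HB.instance Definition _ := Countable.copy sym (can_type sym_to_natK).
Definition sym_enum := [:: sa; sb; sc; sd; se; sf; sg].
Lemma sym_enumP : Finite.axiom sym_enum. Proof. by case. Qed.
HB.instance Definition _ := isFinite.Build sym sym_enumP.

Definition array (n : nat) := 'I_n -> 'I_n -> sym.

Definition Lpp_rows : seq (seq sym) :=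
  [:: [:: sa; sb; sc; sd; se; sf];
      [:: sb; sc; sa; se; sf; sd];
      [:: sc; sa; sb; sf; sd; se];
      [:: sd; se; sf; sa; sc; sb];
      [:: se; sf; sd; sc; sb; sa];
      [:: sf; sd; se; sb; sa; sc]].

Definition Lpp : array 6 := fun i j => nth sa (nth [::] Lpp_rows i) j.

Definition replace_d (S : {set 'I_6 * 'I_6}) : array 6 :=
  fun i j => if (Lpp i j == sd) && ((i, j) \in S) then sg else Lpp i j.

Definition is_transversal_arr {n : nat} (A : array n) (T : {set 'I_n * 'I_n}) : Prop :=
  #|T| = n /\
  {in T &, forall x y, x != y ->
     [/\ x.1 != y.1, x.2 != y.2 & A x.1 x.2 != A y.1 y.2]}.

(* Main.v *)
Require Import Defs.
From mathcomp Require Import all_boot.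

Definition Ln (i j : nat) := nth sa (nth [::] Lpp_rows i) j.
Definition badn (l : seq nat) := has (fun i => has (fun j => (i != j) && (Ln i (nth 0 l i) == Ln j (nth 0 l j)) && (Ln i (nth 0 l i) != sd)) (iota 0 6)) (iota 0 6)
  || has (fun i => has (fun j => has (fun k => [&& i != j, j != k, i != k, Ln i (nth 0 l i) == sd, Ln j (nth 0 l j) == sd & Ln k (nth 0 l k) == sd]) (iota 0 6)) (iota 0 6)) (iota 0 6).
Definition r6 := iota 0 6.
Definition keyn := all (fun a0 => all (fun a1 => all (fun a2 => all (fun a3 => all (fun a4 => all (fun a5 =>
  uniq [:: a0;a1;a2;a3;a4;a5] ==> badn [:: a0;a1;a2;a3;a4;a5]) r6) r6) r6) r6) r6) r6.
Lemma keyP : keyn. Proof. vm_compute. reflexivity. Qed.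

Definition o (k : nat) (H : k < 6) : 'I_6 := Ordinal H.

Definition lst (s : 'I_6 -> 'I_6) : seq nat :=
  [:: val (s ((@Ordinal 6 0 isT))); val (s ((@Ordinal 6 1 isT))); val (s ((@Ordinal 6 2 isT)));
      val (s ((@Ordinal 6 3 isT))); val (s ((@Ordinal 6 4 isT))); val (s ((@Ordinal 6 5 isT)))].

Lemma nth_lst s i (Hi : i < 6) : nth 0 (lst s) i = val (s (Ordinal Hi)).
Proof.
do 6 (case: i Hi => [|i] Hi; first by rewrite /=; do 2 f_equal; apply: val_inj).
by [].
Qed.

Lemma badn_s (s : 'I_6 -> 'I_6) : injective s -> badn (lst s).
Proof.
move=> sinj.
have K := keyP; rewrite /keyn in K.
have M : forall k : 'I_6, val (s k) \in r6 by move=> k; rewrite mem_iota /=.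
move/allP: K => /(_ _ (M ((@Ordinal 6 0 isT)))).
move/allP => /(_ _ (M ((@Ordinal 6 1 isT)))).
move/allP => /(_ _ (M ((@Ordinal 6 2 isT)))).
move/allP => /(_ _ (M ((@Ordinal 6 3 isT)))).
move/allP => /(_ _ (M ((@Ordinal 6 4 isT)))).
move/allP => /(_ _ (M ((@Ordinal 6 5 isT)))).
move/implyP; apply.
have -> : [:: val (s ((@Ordinal 6 0 isT))); val (s ((@Ordinal 6 1 isT))); val (s ((@Ordinal 6 2 isT)));
      val (s ((@Ordinal 6 3 isT))); val (s ((@Ordinal 6 4 isT))); val (s ((@Ordinal 6 5 isT)))]
  = map (fun k => val (s k)) [:: (@Ordinal 6 0 isT); (@Ordinal 6 1 isT); (@Ordinal 6 2 isT);
      (@Ordinal 6 3 isT); (@Ordinal 6 4 isT); (@Ordinal 6 5 isT)] by [].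
rewrite (map_inj_uniq (f := fun k => val (s k))) //.
by move=> x y /val_inj /sinj.
Qed.

Theorem mainTheorem15 (S : {set 'I_6 * 'I_6}) :
  ~ exists T : {set 'I_6 * 'I_6}, is_transversal_arr (replace_d S) T.
Proof.
move=> [T [cardT HT]].
have injT : {in T &, injective (fun x : 'I_6 * 'I_6 => x.1)}.
  move=> x y xT yT e; apply/eqP; apply: contraT => nxy.
  by case: (HT x y xT yT nxy) => /eqP.
have imT : [set x.1 | x in T] = setT.
  apply/eqP; rewrite eqEcard subsetT cardsT card_ord card_in_imset //.
  by rewrite cardT.
pose f (i : 'I_6) := odflt (i, i) [pick x in T | x.1 == i].
have fP : forall i, f i \in T /\ (f i).1 = i.
  move=> i; rewrite /f; case: pickP => [x /andP [xT /eqP ->] //|].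
  move=> H; exfalso.
  have : i \in [set x.1 | x in T] by rewrite imT inE.
  by case/imsetP=> x xT ei; move: (H x); rewrite xT ei eqxx.
pose s (i : 'I_6) := (f i).2.
have Hd : forall i j, i != j -> replace_d S i (s i) != replace_d S j (s j).
  move=> i j nij; have [fi e1] := fP i; have [fj e2] := fP j.
  have nf : f i != f j by apply: contraNneq nij => e; rewrite -e1 -e2 e.
  by case: (HT _ _ fi fj nf); rewrite e1 e2.
have sinj : injective s.
  move=> i j e; apply/eqP; apply: contraT => nij.
  have [fi e1] := fP i; have [fj e2] := fP j.
  have nf : f i != f j by apply: contraNneq nij => e'; rewrite -e1 -e2 e'.
  by case: (HT _ _ fi fj nf) => _ /eqP; rewrite /s in e.
have B := @badn_s s sinj.
have R1 : forall i, Lpp i (s i) != sd -> replace_d S i (s i) = Lpp i (s i).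
  by move=> i H; rewrite /replace_d (negbTE H).
have R2 : forall i, Lpp i (s i) == sd -> (replace_d S i (s i) == sd) || (replace_d S i (s i) == sg).
  by move=> i H; rewrite /replace_d H /=; case: ((i, s i) \in S); rewrite ?eqxx ?orbT // (eqP H) eqxx.
move: B; rewrite /badn; case/orP.
- case/hasP=> i Hi' /hasP [j Hj' H].
  have Hi : i < 6 by move: Hi'; rewrite mem_iota.
  have Hj : j < 6 by move: Hj'; rewrite mem_iota.
  move: H; rewrite !(@nth_lst s _ Hi) !(@nth_lst s _ Hj) => /andP [/andP [nij e] nd].
  have nij' : Ordinal Hi != Ordinal Hj by [].
  have e' : Lpp (Ordinal Hi) (s (Ordinal Hi)) = Lpp (Ordinal Hj) (s (Ordinal Hj)) := eqP e.
  have ndi : Lpp (Ordinal Hi) (s (Ordinal Hi)) != sd := nd.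
  have ndj : Lpp (Ordinal Hj) (s (Ordinal Hj)) != sd by rewrite -e'.
  by move: (Hd _ _ nij'); rewrite (R1 _ ndi) (R1 _ ndj) e' eqxx.
- case/hasP=> i Hi' /hasP [j Hj' /hasP [k Hk' H]].
  have Hi : i < 6 by move: Hi'; rewrite mem_iota.
  have Hj : j < 6 by move: Hj'; rewrite mem_iota.
  have Hk : k < 6 by move: Hk'; rewrite mem_iota.
  move: H; rewrite !(@nth_lst s _ Hi) !(@nth_lst s _ Hj) !(@nth_lst s _ Hk) => /and5P [nij njk nik di /andP [dj dk]].
  have dij := Hd (Ordinal Hi) (Ordinal Hj) nij.
  have djk := Hd (Ordinal Hj) (Ordinal Hk) njk.
  have dik := Hd (Ordinal Hi) (Ordinal Hk) nik.
  move: (R2 _ di) (R2 _ dj) (R2 _ dk) dij djk dik.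
  by do 3 (case/orP=> /eqP ->); rewrite ?eqxx.
Qed.
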